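(* Let $k\ge 1$ and let $n_1,\ldots,n_k\ge 3$ be (not necessarily distinct) integers such that $\gcd(k, n_1\cdots n_k)=1$. Then $C_{n_1}\Box\cdots\Box C_{n_k}$ is $\mathbb{Z}_{n_1\cdots n_k}$-distance antimagic if and only if all of $n_1,\ldots,n_k$ are odd. In particular, if $k\ge1$ and the odd integer $n\ge 3$ are coprime, then the Cartesian product of $k$ copies of $C_n$ is $\mathbb{Z}_{n^k}$-distance antimagic.
   Context: $C_n$ is the cycle of length $n$. The Cartesian product $G_1\Box\cdots\Box G_k$ has vertex set $V(G_1)\times\cdots\times V(G_k)$, with two tuples adjacent iff they differ in exactly one coordinate $i$ and are adjacent there in $G_i$. For a graph $G$ with $n$ vertices, a $\mathbb{Z}_n$-distance antimagic labelling is a bijection $f:V(G)\to\mathbb{Z}_n$ such that the weights $w_f(x)=\sum_{y\in N(x)} f(y)$ (mod $n$, $N(x)$ the open neighbourhood) are pairwise distinct; $G$ is $\mathbb{Z}_n$-distance antimagic if such a labelling exists. *)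

(* Defs.v *)
From mathcomp Require Import all_boot.
Set Implicit Arguments. Unset Strict Implicit. Unset Printing Implicit Defensive.

(* Adjacency in the cycle C_m on vertex set {0,...,m-1}: a ~ b iff b = a+1 mod m
   or a = b+1 mod m. (For m >= 3 this is the simple cycle of length m.) *)
Definition cyc_adj (m a b : nat) : bool :=
  ((a.+1 %% m) == b) || ((b.+1 %% m) == a).

Definition cprod_vtx (k : nat) (n : 'I_k -> nat) : finType :=
  {dffun forall i : 'I_k, 'I_(n i)}.

Definition cprod_adj (k : nat) (n : 'I_k -> nat) : rel (cprod_vtx n) :=
  fun x y => [exists i : 'I_k,
     cyc_adj (n i) (x i) (y i) && [forall j : 'I_k, (j != i) ==> (x j == y j)]].

(* A graph (V, adj) with |V| = N vertices is Z_N-distance antimagic if there is a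
   bijection f : V -> Z_N (here 'I_N with arithmetic mod N) such that the weights
   w(x) = sum_{y in N(x)} f(y) mod N are pairwise distinct. *)
Definition Zn_distance_antimagic (V : finType) (adj : rel V) : Prop :=
  exists f : V -> 'I_#|V|,
    bijective f /\
    injective (fun x : V => (\sum_(y | adj x y) val (f y)) %% #|V|).

(* Main.v *)
Require Import Defs.
From mathcomp Require Import all_boot all_algebra zify.
Set Implicit Arguments. Unset Strict Implicit. Unset Printing Implicit Defensive.

Lemma ordS_val m (a : 'I_m) : val (ordS a) = if a.+1 < m then a.+1 else 0.
Proof.
rewrite /=; case: ltnP => h; first by rewrite modn_small.
have -> : a.+1 = m by apply/eqP; rewrite eqn_leq h ltn_ord.
by rewrite modnn.
Qed.

Lemma ordS_neq m (a : 'I_m) : 1 < m -> ordS a != a.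
Proof.
move=> hm; apply/negP => /eqP/(congr1 val); rewrite ordS_val.
have := ltn_ord a; case: (ltnP a.+1 m) => h /=; lia.
Qed.

Lemma ord_pred_neq m (a : 'I_m) : 1 < m -> ord_pred a != a.
Proof.
move=> hm; apply/negP => /eqP E.
have := ordS_neq a hm; by rewrite -{1}E ord_predK eqxx.
Qed.

Lemma ordS_pred_neq m (a : 'I_m) : 2 < m -> ordS a != ord_pred a.
Proof.
move=> hm; apply/negP => /eqP E.
have E2 : ordS (ordS a) = a by rewrite E ord_predK.
move: (congr1 val E2); rewrite !ordS_val.
have := ltn_ord a.
case: (ltnP a.+1 m) => h1 /=; [case: (ltnP a.+2 m) => h2 /= | case: (ltnP 1 m) => h2 /=]; lia.
Qed.

Definition upv k (n : 'I_k -> nat) (x : cprod_vtx n) (i : 'I_k) : cprod_vtx n :=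
  finfun (fun j => if j == i then ordS (x j) else x j).
Definition dnv k (n : 'I_k -> nat) (x : cprod_vtx n) (i : 'I_k) : cprod_vtx n :=
  finfun (fun j => if j == i then ord_pred (x j) else x j).

Lemma adjP k (n : 'I_k -> nat) (x y : cprod_vtx n) :
  cprod_adj x y <-> exists i, y = upv x i \/ y = dnv x i.
Proof.
split.
  case/existsP => i /andP [ca /forallP fa]; exists i.
  case/orP: ca => /eqP h; [left|right]; apply/ffunP => j; rewrite ffunE;
    (case: (eqVneq j i) => [->|ne]; last by rewrite (eqP (implyP (fa j) ne))).
  - by apply: val_inj; rewrite /= h.
  - have E : ordS (y i) = x i by apply: val_inj.
    by rewrite -E ordSK.
case => i [->|->]; apply/existsP; exists i; rewrite /cyc_adj !ffunE eqxx /=;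
  (apply/andP; split; last by apply/forallP => j; apply/implyP => ne; rewrite ffunE (negbTE ne)).
  by rewrite eqxx.
by apply/orP; right; apply/eqP; exact: (congr1 val (ord_predK (x i))).
Qed.

Lemma sum_adj k (n : 'I_k -> nat) (hn : forall i, 2 < n i) (x : cprod_vtx n)
  (F : cprod_vtx n -> nat) :
  \sum_(y | cprod_adj x y) F y = \sum_(i < k) (F (upv x i) + F (dnv x i)).
Proof.
pose nb (p : 'I_k * bool) := if p.2 then upv x p.1 else dnv x p.1.
have inj : injective nb.
  move=> [i b] [j b'] /= E.
  have Ei := congr1 (fun z : cprod_vtx n => z i) E.
  have Ej := congr1 (fun z : cprod_vtx n => z j) E.
  rewrite /nb /= in Ei Ej.
  have h1 := hn i; have h1' : 1 < n i by apply: ltnW.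
  have h2 := hn j; have h2' : 1 < n j by apply: ltnW.
  case: (eqVneq i j) => [eij|nij].
    subst j; congr (_, _).
    move: Ei; clear E Ej; case: b b' => [] [] //; rewrite /upv /dnv !ffunE eqxx => /eqP;
      [|rewrite eq_sym]; by rewrite (negbTE (ordS_pred_neq _ h1)).
  exfalso.
  move: Ei; clear E Ej; case: b b' => [] []; rewrite /upv /dnv !ffunE eqxx (negbTE nij) => /eqP;
    by rewrite ?(negbTE (ordS_neq _ h1')) ?(negbTE (ord_pred_neq _ h1')).
transitivity (\sum_(y in nb @: [set: 'I_k * bool]) F y).
  apply: eq_bigl => y; apply/idP/idP.
    move/adjP => [i [->|->]]; apply/imsetP; [exists (i, true) | exists (i, false)] => //.
  case/imsetP => [[i b] _ ->]; apply/adjP; exists i; by case: b; [left|right].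
rewrite big_imset /=; last by move=> ? ? _ _; apply: inj.
rewrite (eq_bigl predT); last by move=> p; rewrite in_setT.
rewrite -(pair_bigA _ (fun i b => F (nb (i, b)))) /=.
by apply: eq_bigr => i _; rewrite big_bool.
Qed.

Definition Mp k (n : 'I_k -> nat) (i : nat) : nat := \prod_(j < k | j < i) n j.
Definition Sv k (n : 'I_k -> nat) (x : cprod_vtx n) : nat := \sum_(j < k) Mp n j * x j.

Lemma S_up k (n : 'I_k -> nat) (x : cprod_vtx n) i :
  Sv (upv x i) + Mp n i * x i = Sv x + Mp n i * ordS (x i).
Proof.
rewrite /Sv (bigD1 i) //= [in RHS](bigD1 i) //= /upv ffunE eqxx.
under eq_bigr => j ji do rewrite ffunE (negbTE ji).
by rewrite addnC addnA addnAC.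
Qed.

Lemma S_dn k (n : 'I_k -> nat) (x : cprod_vtx n) i :
  Sv (dnv x i) + Mp n i * x i = Sv x + Mp n i * ord_pred (x i).
Proof.
rewrite /Sv (bigD1 i) //= [in RHS](bigD1 i) //= /dnv ffunE eqxx.
under eq_bigr => j ji do rewrite ffunE (negbTE ji).
by rewrite addnC addnA addnAC.
Qed.

Lemma ord_pred_val m (a : 'I_m) : val (ord_pred a) = if nat_of_ord a == 0 then m.-1 else (nat_of_ord a).-1.
Proof.
have := ltn_ord a; rewrite /=; case: eqP => [->|ne] h.
  by rewrite add0n modn_small // prednK // ltnW.
have -> : (a + m).-1 = (a.-1) + m by lia.
by rewrite modnDr modn_small //; lia.
Qed.

Lemma ordSP_sum m (a : 'I_m) : 2 < m ->
  val (ordS a) + val (ord_pred a) + m * (nat_of_ord a == m.-1) = 2 * a + m * (nat_of_ord a == 0).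
Proof.
move=> hm; rewrite ordS_val ord_pred_val; have := ltn_ord a.
case: (eqVneq (nat_of_ord a) 0) => [e0|n0]; case: (eqVneq (nat_of_ord a) m.-1) => [e1|n1];
  case: (ltnP a.+1 m) => h /=; lia.
Qed.

Lemma Mp_S k (n : 'I_k -> nat) (i : 'I_k) : Mp n i.+1 = Mp n i * n i.
Proof.
rewrite /Mp (bigD1 i) //= mulnC; congr (_ * _).
apply: eq_bigl => j; rewrite ltnS leq_eqVlt.
case: (eqVneq j i) => [->|ne]; first by rewrite ltnn eqxx andbF.
by rewrite andbT (inj_eq val_inj) (negbTE ne).
Qed.

Lemma Mp_dvd k (n : 'I_k -> nat) i j : i <= j -> Mp n i %| Mp n j.
Proof.
move=> le; rewrite /Mp [X in _ %| X](bigID (fun l : 'I_k => l < i)) /=.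
rewrite [X in _ %| X * _](eq_bigl (fun l : 'I_k => l < i)); first exact: dvdn_mulr.
by move=> l /=; case: (ltnP l i) => h; [rewrite (leq_trans h le) | rewrite andbF].
Qed.

Lemma Mp_k k (n : 'I_k -> nat) : Mp n k = \prod_(j < k) n j.
Proof. by rewrite /Mp; apply: eq_bigl => j; rewrite ltn_ord. Qed.

Lemma Mp_gt0 k (n : 'I_k -> nat) i : (forall j, 0 < n j) -> 0 < Mp n i.
Proof. by move=> h; rewrite /Mp prodn_gt0. Qed.

Lemma card_V k (n : 'I_k -> nat) : #|cprod_vtx n| = \prod_(i < k) n i.
Proof.
rewrite /cprod_vtx card_dep_ffun foldrE big_map big_enum /=.
by apply: eq_bigr => i _; rewrite card_ord.
Qed.


From mathcomp Require Import ring.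
Import GRing.Theory Num.Theory.
Open Scope ring_scope.


Definition Gf k (n : 'I_k -> nat) (c : int) (e : forall i : 'I_k, 'I_(n i) -> int)
  (z : cprod_vtx n) : int :=
  c * (\sum_(j < k) (Mp n j)%:Z * (z j : nat)%:Z) + \sum_(j < k) (Mp n j.+1)%:Z * e j (z j).

Lemma tri k (n : 'I_k -> nat) (hn : forall i, (0 < n i)%N) (c : int)
  (hc : forall i, coprimez c (n i)%:Z)
  (e : forall i : 'I_k, 'I_(n i) -> int) (x y : cprod_vtx n) :
  ((\prod_(i < k) n i)%N%:Z %| Gf c e x - Gf c e y)%Z -> x = y.
Proof.
move=> H.
case: (boolP [exists i, x i != y i]) => [ex|]; last first.
  rewrite negb_exists => /forallP h; apply/ffunP => i; apply/eqP/negPn/h.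
case/existsP: ex => i0 h0.
case: (@arg_minnP _ i0 (fun i : 'I_k => x i != y i) (fun i : 'I_k => val i) h0) => i hi hmin.
suff : x i = y i by move/eqP; rewrite (negbTE hi).
apply: val_inj => /=.
pose T (j : 'I_k) := c * ((Mp n j)%:Z * ((x j : nat)%:Z - (y j : nat)%:Z))
   + (Mp n j.+1)%:Z * (e j (x j) - e j (y j)).
have HD : Gf c e x - Gf c e y = \sum_j T j.
  rewrite /Gf !mulr_sumr -!big_split -sumrB /=; apply: eq_bigr => j _; rewrite /T; ring.
rewrite HD (bigD1 i) //= in H.
have M1 : ((Mp n i.+1)%:Z %| \sum_(j | j != i) T j)%Z.
  apply: rpred_sum => j ji; case: (ltngtP j i) => [lt|gt|eq].
  - have E : x j = y j.
      apply/eqP/negPn/negP => ne; have := hmin j ne; by rewrite leqNgt lt.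
    by rewrite /T E !subrr !mulr0 addr0 dvdz0.
  - apply: rpredD; first apply: dvdz_mull; apply: dvdz_mulr; rewrite dvdzE /=; 
      apply: Mp_dvd => //; exact: ltnW.
  - by move/eqP: ji; case; apply: val_inj.
have M2 : ((Mp n i.+1)%:Z %| (\prod_(i < k) n i)%N%:Z)%Z.
  by rewrite dvdzE /= -Mp_k; apply: Mp_dvd.
have M3 : ((Mp n i.+1)%:Z %| T i)%Z.
  by have := dvdz_trans M2 H; rewrite (rpredDr _ M1).
have M4 : ((Mp n i.+1)%:Z %| c * ((Mp n i)%:Z * ((x i : nat)%:Z - (y i : nat)%:Z)))%Z.
  by have := M3; rewrite /T (rpredDr _ (dvdz_mulr _ (dvdzz _))).
move: M4; rewrite Mp_S PoszM mulrCA dvdz_mul2l; last first.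
  by rewrite eqz_nat -lt0n Mp_gt0.
rewrite Gauss_dvdzr; last by rewrite coprimez_sym.
rewrite -eqz_mod_dvd !modz_nat => /eqP [].
by rewrite !modn_small.
Qed.

Definition ee k (n : 'I_k -> nat) (j : 'I_k) (a : 'I_(n j)) : int :=
  ((nat_of_ord a == 0%N) : nat)%:Z - ((nat_of_ord a == (n j).-1) : nat)%:Z.

Lemma PoszSum (I : finType) (F : I -> nat) : (\sum_i F i)%N%:Z = \sum_i (F i)%:Z.
Proof. exact: (big_morph Posz PoszD (erefl _)). Qed.

Lemma W_int k (n : 'I_k -> nat) (hn : forall i, (2 < n i)%N) (x : cprod_vtx n) :
  (\sum_(i < k) (Sv (upv x i) + Sv (dnv x i)))%N%:Z = Gf (2 * k)%N%:Z (@ee k n) x.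
Proof.
have per : forall i, (Sv (upv x i) + Sv (dnv x i))%N%:Z
     = 2 * (Sv x)%:Z + (Mp n i.+1)%:Z * ee (x i).
  move=> i; have h1 := S_up x i; have h2 := S_dn x i; have h3 := ordSP_sum (x i) (hn i).
  rewrite Mp_S /ee.
  have h3' := congr1 (fun t => Mp n i * t)%N h3.
  clear h3; move: h1 h2 h3' => /(congr1 Posz) h1 /(congr1 Posz) h2 /(congr1 Posz) h3.
  rewrite /= !(PoszD, PoszM) in h1 h2 h3 *.
  lia.
rewrite PoszSum (eq_bigr _ (fun i _ => per i)) big_split /= sumr_const card_ord /Gf.
congr (_ + _).
rewrite /Sv PoszSum PoszM.
under eq_bigr => j _ do rewrite PoszM.
rewrite -[X in X = _]mulr_natr mulrAC; congr (_ * _ * _); exact: natz.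
Qed.

Close Scope ring_scope.

Lemma adj_sym k (n : 'I_k -> nat) (x y : cprod_vtx n) : cprod_adj x y = cprod_adj y x.
Proof.
apply: eq_existsb => i; rewrite /cyc_adj orbC; congr (_ && _).
by apply: eq_forallb => j; rewrite [x j == _]eq_sym.
Qed.

Lemma sum_sum_adj k (n : 'I_k -> nat) (hn : forall i, 2 < n i) (g : cprod_vtx n -> nat) :
  \sum_x \sum_(y | cprod_adj x y) g y = \sum_y (2 * k) * g y.
Proof.
rewrite (exchange_big_dep predT) //=; apply: eq_bigr => y _.
rewrite (eq_bigl (fun x => cprod_adj y x)); last by move=> x; rewrite adj_sym.
rewrite (sum_adj hn y (fun _ => g y)) sum_nat_const card_ord; lia.
Qed.

Lemma sum_bij (T : finType) (N : nat) (h : T -> 'I_N) :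
  bijective h -> \sum_(x : T) val (h x) = 'C(N, 2).
Proof.
move=> hb; rewrite -bin2_sum big_mkord.
rewrite [RHS](reindex h) //; exact: onW_bij.
Qed.

Open Scope ring_scope.
Lemma Gf1 k (n : 'I_k -> nat) (z : cprod_vtx n) :
  Gf 1%R (fun i (_ : 'I_(n i)) => 0%R) z = (Sv z)%:Z.
Proof.
rewrite /Gf [X in _ + X]big1 ?addr0 ?mul1r; last by move=> j _; rewrite mulr0.
rewrite /Sv PoszSum; apply: eq_bigr => j _; by rewrite PoszM.
Qed.

Lemma modz_dvd (N A B : nat) : (A %% N = B %% N)%N -> (N%:Z %| A%:Z - B%:Z)%Z.
Proof. by move=> h; rewrite -eqz_mod_dvd !modz_nat h. Qed.
Close Scope ring_scope.

Theorem mainTheorem13 :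
  (forall (k : nat) (n : 'I_k -> nat),
     1 <= k ->
     (forall i, 3 <= n i) ->
     coprime k (\prod_(i < k) n i) ->
     (Zn_distance_antimagic (@cprod_adj k n) <-> (forall i, odd (n i))))
  /\
  (forall k m : nat,
     1 <= k -> 3 <= m -> odd m -> coprime k m ->
     Zn_distance_antimagic (@cprod_adj k (fun _ => m))).
Proof.
have part1 : forall (k : nat) (n : 'I_k -> nat),
     1 <= k -> (forall i, 3 <= n i) -> coprime k (\prod_(i < k) n i) ->
     (Zn_distance_antimagic (@cprod_adj k n) <-> (forall i, odd (n i))).
  move=> k n hk hn hc.
  have hn2 : forall i, 2 < n i := hn.
  have hn0 : forall i, 0 < n i by move=> i; apply: leq_trans (hn i).
  have Npos : 0 < #|cprod_vtx n| by rewrite card_V prodn_gt0.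
  split.
  - case=> f [fbij winj] i; apply/negPn/negP => ev.
    set N := #|cprod_vtx n| in f fbij winj Npos *.
    have Nev : ~~ odd N.
      by rewrite /N card_V (bigD1 i) //= oddM (negbTE ev).
    pose W' x := Ordinal (ltn_pmod (\sum_(y | cprod_adj x y) val (f y)) Npos).
    have W'inj : injective W' by move=> x y /(congr1 val) /= /winj.
    have W'bij := inj_card_bij W'inj (eq_leq (card_ord N)).
    have s1 := sum_bij W'bij.
    have s2 := sum_bij fbij.
    have s3 := sum_sum_adj hn2 (fun y => val (f y)).
    have key : 'C(N, 2) %% N = (2 * k * 'C(N, 2)) %% N.
      by rewrite -{1}s1 /= modn_summ s3 -big_distrr /= s2.
    move: key; rewrite bin2.
    have [m hm] : exists m, N = m.*2.
      by exists N./2; rewrite -[LHS](odd_double_half N) (negbTE Nev).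
    have m0 : 0 < m by have := Npos; rewrite hm double_gt0.
    rewrite hm -doubleMl half_double.
    have -> : (2 * k * (m * (m.*2).-1)) %% m.*2 = 0.
      rewrite (_ : 2 * k * (m * (m.*2).-1) = (k * (m.*2).-1) * m.*2); last by rewrite -!muln2; nia.
      exact: modnMl.
    move=> h; have : m * 2 %| m * (m.*2).-1 by rewrite /dvdn muln2 h.
    rewrite dvdn_pmul2l // dvdn2.
    have -> : (m.*2).-1 = (m.-1).*2.+1 by rewrite -!muln2; lia.
    by rewrite /= odd_double.
  - move=> hodd.
    set N := #|cprod_vtx n| in Npos *.
    have NE : N = \prod_(i < k) n i by rewrite /N card_V.
    pose f (x : cprod_vtx n) := Ordinal (ltn_pmod (Sv x) Npos).
    have finj : injective f.
      move=> x y /(congr1 val) /= /modz_dvd; rewrite -!Gf1 NE.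
      apply: tri => // i; exact: coprime1n.
    exists f; split; first exact: (inj_card_bij finj (eq_leq (card_ord N))).
    move=> x y /=.
    rewrite !modn_summ -/N.
    rewrite !(sum_adj hn2) => /modz_dvd; rewrite !W_int // NE.
    apply: tri => // i; rewrite coprimezE /= coprimeMl coprime2n hodd /=.
    apply: coprime_dvdr hc; by rewrite (bigD1 i) //= dvdn_mulr.
split; first exact: part1.
move=> k m hk hm hodd hc; apply/(part1 k (fun _ => m) hk) => //.
by rewrite prod_nat_const card_ord coprimeXr.
Qed.
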